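(* Let $G=(V,E)$ be a finite undirected graph with $|E|>0$, and let $\mathcal{A}_G$ be the DPA defined below. Then $\mathcal{A}_G$ has informative right-congruence.
   Context: $\Sigma:=V\cup\{x_v\mid v\in V\}$ (with fresh letters $x_v$). $\mathcal{A}_G=(\Sigma,V\cup\{q_G\},\delta_G,q_G,c_G)$ has state set $V\cup\{q_G\}$, initial state $q_G$, and for all $u,v\in V$ with $u\neq v$: $\delta_G(q_G,u)=u$, $\delta_G(q_G,x_u)=q_G$, $\delta_G(u,u)=u$, $\delta_G(u,x_u)=u$, $\delta_G(u,v)=q_G$, $\delta_G(u,x_v)=q_G$; priorities $c_G(q_G)=1$ and $c_G(u)=0$ for $u\in V$. A DPA accepts $\alpha\in\Sigma^\omega$ iff the maximal priority among states visited infinitely often in its run is even. For $L\subseteq\Sigma^\omega$, $u\sim_L v$ iff for all $\alpha\in\Sigma^\omega$: $u\alpha\in L\iff v\alpha\in L$. An automaton accepting $L$ has informative right-congruence if its transition system is isomorphic to the transition system induced by $\sim_L$ (states the classes $[u]$, initial $[\epsilon]$, transitions $[u]\xrightarrow{\sigma}[u\sigma]$). *)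

(* Defs.v *)
From mathcomp Require Import all_boot.
Set Implicit Arguments. Unset Strict Implicit. Unset Printing Implicit Defensive.

Record DPA (Sigma : finType) := MkDPA {
  dpa_state : finType;
  dpa_delta : dpa_state -> Sigma -> dpa_state;
  dpa_init  : dpa_state;
  dpa_prio  : dpa_state -> nat }.
Arguments dpa_state {Sigma} d.
Arguments dpa_delta {Sigma} d _ _.
Arguments dpa_init {Sigma} d.
Arguments dpa_prio {Sigma} d _.

Definition oword (Sigma : Type) := nat -> Sigma.

Fixpoint run (Sigma : finType) (A : DPA Sigma) (alpha : oword Sigma) (n : nat)
  : dpa_state A :=
  match n with
  | 0 => dpa_init A
  | n'.+1 => dpa_delta A (run A alpha n') (alpha n')
  end.

Definition visited_inf (Sigma : finType) (A : DPA Sigma) (alpha : oword Sigma)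
  (q : dpa_state A) : Prop :=
  forall N, exists n, N <= n /\ @run Sigma A alpha n = q.

Definition dpa_accepts (Sigma : finType) (A : DPA Sigma) (alpha : oword Sigma) : Prop :=
  exists p : nat,
    ~~ odd p /\
    (exists q, @visited_inf Sigma A alpha q /\ dpa_prio A q = p) /\
    (forall q, @visited_inf Sigma A alpha q -> dpa_prio A q <= p).

Definition lang (Sigma : finType) (A : DPA Sigma) : oword Sigma -> Prop :=
  dpa_accepts A.

Definition prepend (Sigma : Type) (u : seq Sigma) (alpha : oword Sigma) : oword Sigma :=
  fun n => if n < size u then nth (alpha 0) u n else alpha (n - size u).

Definition rcong (Sigma : Type) (L : oword Sigma -> Prop) (u v : seq Sigma) : Prop :=
  forall alpha : oword Sigma, L (prepend u alpha) <-> L (prepend v alpha).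

Definition rclass (Sigma : Type) (L : oword Sigma -> Prop) (u : seq Sigma)
  : seq Sigma -> Prop := fun w => rcong L w u.

Definition is_rclass (Sigma : Type) (L : oword Sigma -> Prop) (C : seq Sigma -> Prop) : Prop :=
  exists u, C = rclass L u.

Definition rc_trans (Sigma : Type) (L : oword Sigma -> Prop)
  (C : seq Sigma -> Prop) (s : Sigma) (D : seq Sigma -> Prop) : Prop :=
  exists u, C = rclass L u /\ D = rclass L (rcons u s).

(* The transition system of A is isomorphic to the one induced by ~_{L(A)}:
   a bijection phi from the states of A onto the classes, mapping the initial
   state to [eps] and such that the (unique) sigma-successor of phi q in the
   induced system is phi (delta q sigma). *)
Definition informative_rc (Sigma : finType) (A : DPA Sigma) : Prop :=
  let L := lang A in
  exists phi : dpa_state A -> (seq Sigma -> Prop),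
    [/\ (forall q, is_rclass L (phi q)),
        injective phi,
        (forall C, is_rclass L C -> exists q, phi q = C),
        phi (dpa_init A) = rclass L [::] &
        (forall q s D, rc_trans L (phi q) s D <-> D = phi (dpa_delta A q s))].

(* Alphabet Sigma = V u {x_v | v in V}: inl v is the letter v, inr v is x_v.
   States V u {q_G}: Some v is v, None is q_G. *)
Definition AG_delta (V : finType) (q : option V) (a : V + V) : option V :=
  match q, a with
  | None, inl u => Some u
  | None, inr _ => None
  | Some u, inl v => if v == u then Some u else None
  | Some u, inr v => if v == u then Some u else None
  end.

Definition AG_prio (V : finType) (q : option V) : nat :=
  match q with None => 1 | Some _ => 0 end.

Definition AG (V : finType) : DPA (V + V)%type :=
  @MkDPA (V + V)%type (option V) (@AG_delta V) None (@AG_prio V).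

Definition undirected_graph (V : finType) (e : rel V) : Prop :=
  symmetric e /\ irreflexive e.

(* Main.v *)
From Stdlib Require Import Classical FunctionalExtensionality PropExtensionality.
Require Import Defs.
From mathcomp Require Import all_boot.
From mathcomp Require Import zify.

Section AGsec.
Variable V : finType.

Fixpoint runfrom (q : option V) (b : oword (V + V)) (n : nat) : option V :=
  match n with 0 => q | n'.+1 => AG_delta (runfrom q b n') (b n') end.

Definition EC (f : nat -> option V) := exists N v, forall n, N <= n -> f n = Some v.

Lemma run_AG b n : run (AG V) b n = runfrom None b n.
Proof. by elim: n => //= n ->. Qed.

Lemma lang_AG b : lang (AG V) b <-> EC (runfrom None b).
Proof.
split.
- move=> [p [Hp [[q [Hq Hpq]] Hall]]].
  case: q Hq Hpq => [v|] Hq Hpq; last by rewrite -Hpq in Hp.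
  have NN : ~ visited_inf (A:=AG V) b None.
    by move=> /Hall; rewrite -Hpq.
  have [N HN] : exists N, forall n, N <= n -> run (AG V) b n <> None.
    apply: NNPP => H; apply: NN => N.
    apply: NNPP => H2; apply: H; exists N => n Hn Hr; apply: H2; by exists n.
  case E: (run (AG V) b N) => [w|]; last by have := HN N (leqnn N).
  exists N, w => n Hn; rewrite -run_AG.
  elim: n Hn => [|n IH] Hn.
    by move: E; have -> : N = 0 by lia.
  case: (ltnP N n.+1) => Hlt; last by move: E; have -> : N = n.+1 by lia.
  have := HN n.+1 Hn; rewrite /= IH; last by lia.
  by case: (b n) => x /=; case: (x == w).
- move=> [N [v H]]; exists 0; split => //; split.
  + exists (Some v); split => // M; exists (maxn N M); split; first by lia.
    by rewrite run_AG H //; lia.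
  + move=> q Hq; case: q Hq => [w|] Hq //.
    have [n [Hn1 Hn2]] := Hq N; by rewrite run_AG H in Hn2.
Qed.

Lemma runfromD q b m n :
  runfrom q b (m + n) = runfrom (runfrom q b m) (fun k => b (m + k)) n.
Proof. elim: n => [|n IH]; first by rewrite addn0. by rewrite addnS /= IH. Qed.

Lemma runfrom_ext q b c : (forall k, b k = c k) -> forall n, runfrom q b n = runfrom q c n.
Proof. move=> H; elim=> //= n ->; by rewrite H. Qed.

Lemma runfrom_prepend u : forall q alpha,
  runfrom q (prepend u alpha) (size u) = foldl (@AG_delta V) q u.
Proof.
elim: u => [|a u IH] q alpha; first by [].
rewrite (_ : size (a :: u) = 1 + size u) // runfromD /= -(IH (AG_delta q a) alpha).
apply: runfrom_ext => k; rewrite /prepend /=.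
by case: ifP.
Qed.

Lemma EC_shift f m : EC f <-> EC (fun n => f (m + n)).
Proof.
split => [[N [v H]]|[N [v H]]].
- exists N, v => n Hn; apply: H; lia.
- exists (m + N), v => n Hn; have := H (n - m); rewrite subnKC; last by lia.
  apply; lia.
Qed.

Definition runw (u : seq (V + V)) := foldl (@AG_delta V) None u.

Lemma lang_prepend u alpha :
  lang (AG V) (prepend u alpha) <-> EC (runfrom (runw u) alpha).
Proof.
rewrite lang_AG (EC_shift _ (size u)).
have E : forall n, runfrom None (prepend u alpha) (size u + n) = runfrom (runw u) alpha n.
  move=> n; rewrite runfromD runfrom_prepend; apply: runfrom_ext => k.
  by rewrite /prepend ltnNge leq_addr /= addKn.
split => [[N [v H]]|[N [v H]]]; exists N, v => n Hn.
- by rewrite -E H.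
- by rewrite E H.
Qed.

Lemma rf_same u n : runfrom (Some u) (fun _ => inr u) n = Some u.
Proof. by elim: n => //= n ->; rewrite /= eqxx. Qed.

Lemma rf_none u n : runfrom None (fun _ => inr u) n = None.
Proof. by elim: n => //= n ->. Qed.

Lemma rf_diff u v n : u != v -> runfrom (Some v) (fun _ => inr u) n.+1 = None.
Proof.
move=> Huv; elim: n => [|n IH] /=; first by rewrite (negbTE Huv).
by move: IH => /= ->.
Qed.

Lemma EC_same u : EC (runfrom (Some u) (fun _ => inr u)).
Proof. by exists 0, u => n _; rewrite rf_same. Qed.

Lemma EC_none u : ~ EC (runfrom None (fun _ => inr u)).
Proof. by move=> [N [v H]]; have := H N (leqnn N); rewrite rf_none. Qed.

Lemma EC_diff u v : u != v -> ~ EC (runfrom (Some v) (fun _ => inr u)).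
Proof.
move=> Huv [N [v' H]]; have := H N.+1 (leqnSn N); by rewrite rf_diff.
Qed.

Lemma distinguish q q' :
  (forall alpha, EC (runfrom q alpha) <-> EC (runfrom q' alpha)) -> q = q'.
Proof.
case: q q' => [a|] [b|] // H.
- case: (eqVneq a b) => [->//|Hab].
  by have [H1 _] := H (fun _ => inr a); case: (@EC_diff a b Hab (H1 (EC_same a))).
- by have [H1 _] := H (fun _ => inr a); case: (@EC_none a (H1 (EC_same a))).
- by have [_ H1] := H (fun _ => inr b); case: (@EC_none b (H1 (EC_same b))).
Qed.

Lemma rcong_iff u w : rcong (lang (AG V)) u w <-> runw u = runw w.
Proof.
split => [H|E alpha].
- apply: distinguish => alpha; rewrite -!lang_prepend; exact: H.
- by rewrite !lang_prepend E.
Qed.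

Lemma rclass_eq u w : rclass (lang (AG V)) u = rclass (lang (AG V)) w <-> runw u = runw w.
Proof.
split => [E|E].
- have : rclass (lang (AG V)) u u by move=> alpha.
  by rewrite E => /rcong_iff.
- apply: functional_extensionality => x; apply: propositional_extensionality.
  rewrite /rclass !rcong_iff E; by [].
Qed.

Definition word (q : option V) : seq (V + V) :=
  match q with None => [::] | Some v => [:: inl v] end.

Lemma runw_word q : runw (word q) = q.
Proof. by case: q => [v|] //=; rewrite /runw /=. Qed.

Lemma runw_rcons u s : runw (rcons u s) = AG_delta (runw u) s.
Proof. by rewrite /runw foldl_rcons. Qed.

End AGsec.

Theorem lemma3 (V : finType) (e : rel V) :
  undirected_graph e ->
  (exists u v : V, e u v) ->
  informative_rc (AG V).
Proof.
move=> _ _; rewrite /informative_rc.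
exists (fun q => rclass (lang (AG V)) (@word V q)); split.
- move=> q; by exists (@word V q).
- by move=> q q' /rclass_eq; rewrite !runw_word.
- move=> C [u ->]; exists (@runw V u); apply/rclass_eq; by rewrite runw_word.
- by [].
- move=> q s D; split.
  + move=> [u [/rclass_eq E ->]]; apply/rclass_eq.
    by rewrite runw_word runw_rcons -E runw_word.
  + move=> ->; exists (@word V q); split => //; apply/rclass_eq.
    by rewrite runw_word runw_rcons runw_word.
Qed.
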